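(* Let $n\geq 4$ and let $S$ be any meet-semilattice of order $n$ having a greatest element. Then \[ \sum_{s\in S}|\mathrm{cov}_1(s)|\leq\sum_{s\in F_n}|\mathrm{cov}_1(s)|, \] where $F_n=\{0,a_1,\ldots,a_{n-2},1\}$ is the meet-semilattice of order $n$ with least element $0$, greatest element $1$, and $a_1,\ldots,a_{n-2}$ pairwise incomparable.
   Context: The meet is written as multiplication. For a semilattice $S$ and $s\in S$, $\mathrm{cov}_1(s)$ denotes the set of equations $xa=xa'$ ($a,a'\in S$; formally ordered pairs $(a,a')$) satisfied by $s$, i.e. with $sa=sa'$; thus $|\mathrm{cov}_1(s)|=|\{(a,a')\in S\times S\mid sa=sa'\}|$. *)

(* Defs.v *)
From mathcomp Require Import all_boot.
Set Implicit Arguments. Unset Strict Implicit. Unset Printing Implicit Defensive.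

Definition is_meet_semilattice (T : Type) (m : T -> T -> T) : Prop :=
  (forall x y z, m x (m y z) = m (m x y) z) /\
  (forall x y, m x y = m y x) /\
  (forall x, m x x = x).

Definition has_greatest (T : Type) (m : T -> T -> T) : Prop :=
  exists t : T, forall x, m t x = x.

Definition cov1_card (T : finType) (m : T -> T -> T) (s : T) : nat :=
  #|[set p : T * T | m s p.1 == m s p.2]|.

(* F_n on 'I_n: 0 is the least element, n-1 the greatest element,
   1, ..., n-2 are the pairwise incomparable atoms a_1..a_{n-2}. *)
Definition Fn_meet (n : nat) (x y : 'I_n) : 'I_n :=
  if x == y then x
  else if val x == n.-1 then y
  else if val y == n.-1 then x
  else Ordinal (leq_ltn_trans (leq0n x) (ltn_ord x)).

(* Main.v *)
Require Import Defs.
From mathcomp Require Import all_boot zify.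
Set Implicit Arguments. Unset Strict Implicit. Unset Printing Implicit Defensive.

Lemma cardU_le (T : finType) (A B : {set T}) : #|A :|: B| <= #|A| + #|B|.
Proof. rewrite cardsU; exact: leq_subr. Qed.
Arguments cardU_le {T}.

Lemma sum3 (T : finType) (t b : T) (F : T -> nat) A B C :
  t != b -> F t = A -> F b = B -> (forall s, s != t -> s != b -> F s = C) ->
  \sum_s F s = A + B + (#|T| - 2) * C.
Proof.
move=> tb Ft Fb Fs.
have bt : b != t by rewrite eq_sym in tb.
rewrite (bigD1 t) //= (bigD1 b) /= ?bt //.
rewrite (eq_bigr (fun _ => C)); last by move=> s /andP[]; apply: Fs.
rewrite sum_nat_const Ft Fb addnA.
congr (_ + _ * _).
rewrite [#|T|](cardD1 t) [#|[predD1 T & t]|](cardD1 b) !inE bt /=.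
have -> : #|[predD1 [predD1 T & t] & b]| = #|(fun i : T => (i != t) && (i != b))|.
  by apply: eq_card => i; rewrite !inE andbT andbC unfold_in.
by rewrite addnA addKn.
Qed.

Section S.
Variables (T : finType) (m : T -> T -> T).
Hypothesis Hm : is_meet_semilattice m.

Definition Dn s := [set a | m s a == a].
Definition Up s := [set a | (m s a == s) && (a != s)].
Definition Wd s := [set a | (m s a != a) && (m s a != s)].

Lemma mA x y z : m x (m y z) = m (m x y) z. Proof. by case: Hm. Qed.
Lemma mC x y : m x y = m y x. Proof. by case: Hm => _ []. Qed.
Lemma mI x : m x x = x. Proof. by case: Hm => _ []. Qed.

Lemma partition s : #|Dn s| + (#|Up s| + #|Wd s|) = #|T|.
Proof.
rewrite -(cardsC (Dn s)); congr (_ + _).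
have -> : ~: Dn s = Up s :|: Wd s.
  apply/setP => a; rewrite !inE.
  case: (m s a =P a) => [->|ne] /=.
    by case: eqP => // ->; rewrite eqxx.
  case: (m s a =P s) => [e|] //=; rewrite orbF.
  by case: eqP => // as_; exfalso; apply: ne; rewrite e as_.
rewrite cardsU.
suff -> : Up s :&: Wd s = set0 by rewrite cards0 subn0.
by apply/setP => a; rewrite !inE; case: (m s a =P s) => //= _; rewrite !andbF.
Qed.

Lemma cov_bound s :
  cov1_card m s <= #|Up s| * #|Up s| + #|Wd s| * #|Wd s|
                   + 2 * (#|Up s| + #|Wd s|) + #|Dn s|.
Proof.
have cD : #|~: Dn s| = #|Up s| + #|Wd s|.
  by have := partition s; have := cardsC (Dn s); lia.
rewrite /cov1_card.
set P := [set p : T * T | _].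
have sub : P \subset (setX (Up s) (Up s) :|: setX (Wd s) (Wd s)) :|:
   ([set (a, m s a) | a in ~: Dn s] :|: [set (m s a, a) | a in ~: Dn s])
   :|: [set (a, a) | a in Dn s].
  apply/subsetP => [[a b]]; rewrite !inE /= => /eqP e.
  case: (m s a =P a) => [ea|na]; case: (m s b =P b) => [eb|nb].
  - apply/orP; right; apply/imsetP; exists a; first by rewrite inE ea.
    by rewrite -ea e eb.
  - apply/orP; left; apply/or3P; apply: Or33; apply/imsetP.
    exists b; first by rewrite !inE; apply/eqP.
    by rewrite -e ea.
  - apply/orP; left; apply/or3P; apply: Or32; apply/imsetP.
    exists a; first by rewrite !inE; apply/eqP.
    by rewrite e eb.
  - apply/orP; left; apply/or3P; apply: Or31.
    have mm : forall c, m s (m s c) = m s c by move=> c; rewrite mA mI.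
    case: (m s a =P s) => [sa|nsa].
      have sb : m s b = s by rewrite -e.
      apply/orP; left; rewrite sb eqxx /=.
      apply/andP; split; apply/negP => /eqP E; [apply: na | apply: nb].
        by rewrite sa E.
      by rewrite sb E.
    have nsb : m s b <> s by rewrite -e.
    apply/orP; right; rewrite /=.
    by apply/eqP.
apply: (leq_trans (subset_leq_card sub)).
have h1 := cardU_le (setX (Up s) (Up s)) (setX (Wd s) (Wd s)).
have h2 := cardU_le [set (a, m s a) | a in ~: Dn s] [set (m s a, a) | a in ~: Dn s].
have h3 := cardU_le (setX (Up s) (Up s) :|: setX (Wd s) (Wd s))
   ([set (a, m s a) | a in ~: Dn s] :|: [set (m s a, a) | a in ~: Dn s]).
have h4 := leq_imset_card (fun a => (a, m s a)) (~: Dn s).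
have h5 := leq_imset_card (fun a => (m s a, a)) (~: Dn s).
have h6 := leq_imset_card (fun a => (a, a)) (Dn s).
have h7 := cardU_le ((setX (Up s) (Up s) :|: setX (Wd s) (Wd s)) :|:
   ([set (a, m s a) | a in ~: Dn s] :|: [set (m s a, a) | a in ~: Dn s])) [set (a, a) | a in Dn s].
rewrite !cardsX in h1.
lia.
Qed.
End S.

Section S2.
Variables (T : finType) (m : T -> T -> T).
Hypothesis Hm : is_meet_semilattice m.

Lemma card_ind (P : pred T) : #|[set a | P a]| = \sum_a (P a : nat).
Proof.
rewrite -sum1dep_card big_mkcond; apply: eq_bigr => a _; by case: (P a).
Qed.

Lemma sum_up_dn : \sum_s #|[set a | m s a == s]| = \sum_s #|Dn m s|.
Proof.
rewrite /Dn.
under eq_bigr do rewrite card_ind.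
under [RHS]eq_bigr do rewrite card_ind.
rewrite exchange_big; apply: eq_bigr => a _; apply: eq_bigr => s _.
by rewrite (mC Hm).
Qed.

Lemma up_card s : #|[set a | m s a == s]| = #|Up m s| + 1.
Proof.
have -> : [set a | m s a == s] = s |: Up m s.
  apply/setP => a; rewrite !inE.
  case: (a =P s) => [->|]; first by rewrite (mI Hm) eqxx.
  by rewrite andbT.
by rewrite cardsU1 !inE eqxx andbF addnC.
Qed.

Lemma bottom_ex (t : T) : exists b, forall a, m b a = b.
Proof.
have H : forall l : seq T, forall a, a \in l -> m (foldr m t l) a = foldr m t l.
  elim=> [|x l IH] a //=; rewrite inE => /orP[/eqP ->|al].
    by rewrite (mC Hm) (mA Hm) (mI Hm).
  by rewrite -(mA Hm) IH.
exists (foldr m t (enum T)) => a; apply: H; by rewrite mem_enum.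
Qed.

Lemma S_sum n : #|T| = n -> 4 <= n -> has_greatest m ->
  \sum_s cov1_card m s <= (3*n-2) + ((n-1)*(n-1)+1) + (n-2)*((n-2)*(n-2)+4).
Proof.
move=> cT n4 [t Ht].
have [b Hb] := bottom_ex t.
have tb : t != b.
  apply/eqP => E; move: n4; rewrite -cT.
  have : #|T| <= #|[set b]|.
    apply: subset_leq_card; apply/subsetP => x _.
    by rewrite inE -(Ht x) E Hb.
  rewrite cards1; lia.
pose H s := if s == t then 3*n-2 else if s == b then (n-1)*(n-1)+1
            else (n-2)*(n-2)+4.
have key : forall s, cov1_card m s + 2 * #|Dn m s| <= H s + 2 * (#|Up m s| + 1).
  move=> s.
  have cb := cov_bound Hm s.
  have pt := @partition T m s.
  rewrite cT in pt.
  rewrite /H; case: (s =P t) => [E|st].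
    subst s.
    have U0 : Up m t = set0.
      apply/setP => a; rewrite !inE Ht; by case: (a =P t).
    have W0 : Wd m t = set0.
      apply/setP => a; by rewrite !inE Ht eqxx.
    rewrite U0 W0 !cards0 in cb pt; rewrite U0 cards0; nia.
  case: (s =P b) => [E|sb].
    subst s.
    have W0 : Wd m b = set0.
      apply/setP => a; by rewrite !inE Hb eqxx andbF.
    have D1 : Dn m b = [set b].
      apply/setP => a; rewrite !inE Hb; by rewrite eq_sym.
    rewrite W0 D1 cards0 cards1 in cb pt; rewrite D1 cards1; nia.
  have U1 : 1 <= #|Up m s|.
    apply/card_gt0P; exists t; rewrite !inE (mC Hm) Ht eqxx /=.
    by apply/eqP => E; apply: st.
  have D2 : 2 <= #|Dn m s|.
    have <- : #|[set s; b]| = 2 by rewrite cards2; case: eqP.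
    apply: subset_leq_card; apply/subsetP => a; rewrite !inE.
    by case/orP => /eqP ->; rewrite ?(mA Hm) ?(mI Hm) // (mC Hm) Hb.
  set x := #|Up m s| in cb pt U1 *; set w := #|Wd m s| in cb pt *;
  set d := #|Dn m s| in cb pt D2 *.
  have nx : n = x + w + d by lia.
  subst n.
  have c0 : (d - 2) * (d - 3) >= 0 by [].
  nia.
have tot : \sum_s (cov1_card m s + 2 * #|Dn m s|) <= \sum_s (H s + 2 * (#|Up m s| + 1)).
  by apply: leq_sum => s _.
rewrite !big_split /= in tot.
have E : \sum_s #|Dn m s| = \sum_s (#|Up m s| + 1).
  by rewrite -sum_up_dn; apply: eq_bigr => s _; exact: up_card.
rewrite big_split /= in E.
rewrite E in tot.
have S : \sum_s H s = 3*n-2 + ((n-1)*(n-1)+1) + (#|T| - 2)*((n-2)*(n-2)+4).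
  apply: (sum3 tb).
  - by rewrite /H eqxx.
  - by rewrite /H eq_sym (negbTE tb) eqxx.
  - by move=> s st sb; rewrite /H (negbTE st) (negbTE sb).
rewrite cT in S; lia.
Qed.
End S2.

Lemma Fn_val n (x y : 'I_n) : val (Fn_meet x y) =
  if x == y then val x else if val x == n.-1 then val y
  else if val y == n.-1 then val x else 0.
Proof. rewrite /Fn_meet; by do 3 case: ifP => //. Qed.

Lemma Fn_sum n : 4 <= n ->
  n + n*n + (n-2)*((n-2)*(n-2)+4) <= \sum_(s : 'I_n) cov1_card (@Fn_meet n) s.
Proof.
move=> n4.
have lt1 : n.-1 < n by lia.
have lt0 : 0 < n by lia.
pose tp := Ordinal lt1. pose z := Ordinal lt0.
have tz : tp != z by apply/eqP => /(congr1 val) /=; lia.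
pose K (s : 'I_n) := if s == tp then n else if s == z then n*n else (n-2)*(n-2)+4.
have S : \sum_s K s = n + n*n + (#|'I_n| - 2)*((n-2)*(n-2)+4).
  apply: (sum3 tz).
  - by rewrite /K eqxx.
  - by rewrite /K eq_sym (negbTE tz) eqxx.
  - by move=> s st sb; rewrite /K (negbTE st) (negbTE sb).
rewrite card_ord in S; rewrite -S.
apply: leq_sum => s _; rewrite /K /cov1_card.
case: (s =P tp) => [->|st].
  apply: (@leq_trans #|[set (a, a) | a : 'I_n]|).
    by rewrite card_imset ?card_ord //; move=> x y [].
  apply: subset_leq_card; apply/subsetP => p /imsetP [a _ ->].
  by rewrite inE.
case: (s =P z) => [->|sz].
  apply: (@leq_trans #|[set: 'I_n * 'I_n]|).
    by rewrite cardsT card_prod card_ord.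
  apply: subset_leq_card; apply/subsetP => [[a b]] _; rewrite inE /=.
  apply/eqP/val_inj; rewrite !Fn_val /=.
  have nz : (0 == n.-1) = false by apply/eqP; lia.
  by rewrite nz !if_same.
pose A := [set s; tp].
have cA : #|A| = 2 by rewrite cards2; case: (s =P tp).
have cB : #|~: A| = n - 2 by have := cardsC A; rewrite cA card_ord; lia.
have snt : val s != n.-1.
  by apply/eqP => E; apply: st; apply: val_inj.
have sn0 : val s != 0 by apply/eqP => E; apply: sz; apply: val_inj.
have inA : forall a, a \in A -> val (Fn_meet s a) = val s.
  have stb : s != tp by apply/eqP.
  move=> a; rewrite !inE => /orP[] /eqP ->; first by rewrite Fn_val eqxx.
  by rewrite Fn_val (negbTE snt) (negbTE stb) /= eqxx.
have inB : forall a, a \notin A -> val (Fn_meet s a) = 0.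
  move=> a; rewrite !inE negb_or => /andP[as_ at_].
  rewrite Fn_val eq_sym (negbTE as_) (negbTE snt).
  suff -> : (val a == n.-1) = false by [].
  by apply/negbTE; apply: contra at_ => /eqP E; apply/eqP/val_inj.
apply: (@leq_trans #|setX A A :|: setX (~: A) (~: A)|).
  apply: eq_leq; rewrite cardsU !cardsX cA cB.
  suff -> : setX A A :&: setX (~: A) (~: A) = set0 by rewrite cards0; nia.
  apply/setP => [[a b]]; rewrite !inE /=.
  by case: ((a == s) || (a == tp)); rewrite ?andbF.
apply: subset_leq_card; apply/subsetP => [[a b]]; rewrite !inE /=.
case/orP => /andP [ha hb]; apply/eqP/val_inj.
  have E1 := inA a; have E2 := inA b; rewrite !inE ha hb in E1 E2.
  exact: (etrans (E1 isT) (esym (E2 isT))).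
have E1 := inB a; have E2 := inB b; rewrite !inE in E1 E2.
exact: (etrans (E1 ha) (esym (E2 hb))).
Qed.

Theorem theorem3 (n : nat) (T : finType) (m : T -> T -> T) :
  4 <= n -> #|T| = n -> is_meet_semilattice m -> has_greatest m ->
  \sum_(s : T) cov1_card m s <= \sum_(s : 'I_n) cov1_card (@Fn_meet n) s.
Proof.
move=> n4 cT Hm Hg.
have h1 := S_sum Hm cT n4 Hg.
have h2 := Fn_sum n4.
apply: (leq_trans h1); apply: leq_trans h2.
have e : 3 * n - 2 + ((n - 1) * (n - 1) + 1) = n + n * n by nia.
by rewrite e.
Qed.
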